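(* There exists $h_c\in(\tfrac12,\tfrac34)$ such that $\sum_{k=1}^\infty\rho_h^2(k)<\frac14$ for all $h\in(\tfrac12,h_c)$, and $\sum_{k=1}^\infty\rho_h^2(k)>\frac14$ for all $h\in(h_c,\tfrac34)$.
   Context: $\rho_h(k)=\frac12\big((k+1)^{2h}+(k-1)^{2h}-2k^{2h}\big)$ for integers $k\ge1$. *)

(* Defs.v *)
From Stdlib Require Import Reals.
From Coquelicot Require Import Coquelicot.
Open Scope R_scope.

(* x^a for x >= 0 and real a > 0, with the convention 0^a = 0
   (Stdlib's Rpower 0 a = 1, which would be wrong at k = 1). *)
Definition rpow (x a : R) : R :=
  if Rle_dec x 0 then 0 else Rpower x a.

Definition rho (h : R) (k : nat) : R :=
  / 2 * (rpow (INR k + 1) (2 * h) + rpow (INR k - 1) (2 * h)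
         - 2 * rpow (INR k) (2 * h)).

(* Main.v *)
Require Import Defs.
From Stdlib Require Import Reals Lra Lia.
From Coquelicot Require Import Coquelicot.
Open Scope R_scope.


Lemma dpow (t y y' : R) : 0 < t -> y' = y - 1 ->
  derivable_pt_lim (fun s => Rpower s y) t (y * Rpower t y').
Proof. intros Ht ->. now apply derivable_pt_lim_power. Qed.

Lemma dF (al be ga a b t : R) : 0 < t ->
  derivable_pt_lim (fun s => al*(s*s) + be*Rpower s b + ga*Rpower s a) t
    (al*(2*t) + be*(b*Rpower t (b-1)) + ga*(a*Rpower t (a-1))).
Proof.
  intros Ht.
  apply is_derive_Reals.
  apply (is_derive_plus (fun s => al*(s*s) + be*Rpower s b)).
  apply (is_derive_plus (fun s => al*(s*s))).
  apply (is_derive_scal (fun s => s*s)). auto_derive; auto; ring.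
  apply (is_derive_scal (fun s => Rpower s b)). apply is_derive_Reals; now apply dpow.
  apply (is_derive_scal (fun s => Rpower s a)). apply is_derive_Reals; now apply dpow.
Qed.

Lemma dF1 (al be ga a b t : R) : 0 < t ->
  derivable_pt_lim (fun s => al*(2*s) + be*(b*Rpower s (b-1)) + ga*(a*Rpower s (a-1))) t
    (al*2 + be*(b*((b-1)*Rpower t (b-2))) + ga*(a*((a-1)*Rpower t (a-2)))).
Proof.
  intros Ht.
  apply is_derive_Reals.
  apply (is_derive_plus (fun s => al*(2*s) + be*(b*Rpower s (b-1)))).
  apply (is_derive_plus (fun s => al*(2*s))).
  apply (is_derive_scal (fun s => 2*s)). auto_derive; auto; ring.
  apply (is_derive_scal (fun s => b*Rpower s (b-1))).
  apply (is_derive_scal (fun s => Rpower s (b-1))). apply is_derive_Reals; apply dpow; auto; ring.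
  apply (is_derive_scal (fun s => a*Rpower s (a-1))).
  apply (is_derive_scal (fun s => Rpower s (a-1))). apply is_derive_Reals; apply dpow; auto; ring.
Qed.

Lemma delta2 (f f1 f2 : R -> R) (x : R) :
  (forall t, x-1 <= t <= x+1 -> derivable_pt_lim f t (f1 t)) ->
  (forall t, x-1 <= t <= x+1 -> derivable_pt_lim f1 t (f2 t)) ->
  (forall t, x-1 <= t <= x+1 -> 0 <= f2 t) ->
  0 <= f (x+1) + f (x-1) - 2 * f x.
Proof.
  intros H1 H2 H3.
  destruct (MVT_cor2 f f1 (x-1) x) as [c1 [E1 R1]]. lra.
  { intros c Hc. apply H1. lra. }
  destruct (MVT_cor2 f f1 x (x+1)) as [c2 [E2 R2]]. lra.
  { intros c Hc. apply H1. lra. }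
  destruct (MVT_cor2 f1 f2 c1 c2) as [c3 [E3 R3]]. lra.
  { intros c Hc. apply H2. lra. }
  assert (0 <= f2 c3) by (apply H3; lra).
  assert (0 <= f1 c2 - f1 c1) by (rewrite E3; apply Rmult_le_pos; lra).
  replace (f (x+1) + f (x-1) - 2 * f x) with ((f (x+1) - f x) - (f x - f (x-1))) by ring.
  rewrite E2, E1. lra.
Qed.

Definition D2 (a x : R) := Rpower (x+1) a + Rpower (x-1) a - 2 * Rpower x a.

Lemma D2_gen (al be ga a b x : R) : 0 < x - 1 ->
  (forall t, x-1 <= t <= x+1 ->
     0 <= al*2 + be*(b*((b-1)*Rpower t (b-2))) + ga*(a*((a-1)*Rpower t (a-2)))) ->
  0 <= al*2 + be * D2 b x + ga * D2 a x.
Proof.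
  intros Hx H.
  pose proof (delta2 (fun s => al*(s*s) + be*Rpower s b + ga*Rpower s a)
    (fun s => al*(2*s) + be*(b*Rpower s (b-1)) + ga*(a*Rpower s (a-1)))
    (fun s => al*2 + be*(b*((b-1)*Rpower s (b-2))) + ga*(a*((a-1)*Rpower s (a-2)))) x) as D.
  assert (HH: 0 <= (fun s => al*(s*s) + be*Rpower s b + ga*Rpower s a) (x+1)
     + (fun s => al*(s*s) + be*Rpower s b + ga*Rpower s a) (x-1)
     - 2 * (fun s => al*(s*s) + be*Rpower s b + ga*Rpower s a) x).
  { apply D.
    - intros t Ht. apply dF. lra.
    - intros t Ht. apply dF1. lra.
    - exact H. }
  simpl in HH. unfold D2. nra.
Qed.

Lemma rp_anti (u v c : R) : 0 < u -> u <= v -> c <= 0 -> Rpower v c <= Rpower u c.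
Proof.
  intros Hu Huv Hc. unfold Rpower.
  destruct (Req_dec c 0) as [->|Hc']. rewrite !Rmult_0_l; lra.
  destruct (Rle_lt_or_eq_dec _ _ Huv) as [Hl|Heq]. 2: subst; lra.
  apply Rlt_le, exp_increasing. pose proof (ln_increasing u v Hu Hl). nra.
Qed.

Lemma rp_mono (u v c : R) : 0 < u -> u <= v -> 0 <= c -> Rpower u c <= Rpower v c.
Proof. intros. apply Rle_Rpower_l; lra. Qed.

Lemma rp_pos (u c : R) : 0 < Rpower u c.
Proof. unfold Rpower. apply exp_pos. Qed.

Lemma D2_upper (a x : R) : 1 < a < 2 -> 1 < x ->
  D2 a x <= a*(a-1) * Rpower (x-1) (a-2).
Proof.
  intros Ha Hx.
  pose proof (D2_gen (a*(a-1) * Rpower (x-1) (a-2) / 2) 0 (-1) a a x) as G.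
  assert (0 <= a*(a-1) * Rpower (x-1) (a-2) / 2 * 2 + 0 * D2 a x + -1 * D2 a x); [|lra].
  apply G. lra. intros t Ht.
  assert (Rpower t (a-2) <= Rpower (x-1) (a-2)) by (apply rp_anti; lra).
  assert (0 < a*(a-1)) by nra. nra.
Qed.

Lemma D2_lower (a x : R) : 1 < a < 2 -> 1 < x ->
  a*(a-1) * Rpower (x+1) (a-2) <= D2 a x.
Proof.
  intros Ha Hx.
  pose proof (D2_gen (-(a*(a-1) * Rpower (x+1) (a-2)) / 2) 0 1 a a x) as G.
  assert (0 <= -(a*(a-1) * Rpower (x+1) (a-2)) / 2 * 2 + 0 * D2 a x + 1 * D2 a x); [|lra].
  apply G. lra. intros t Ht.
  assert (Rpower (x+1) (a-2) <= Rpower t (a-2)) by (apply rp_anti; lra).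
  assert (0 < a*(a-1)) by nra. nra.
Qed.

Lemma D2_mono (a b x : R) : 1 < a -> a <= b -> b < 2 -> 2 <= x ->
  D2 a x <= D2 b x.
Proof.
  intros Ha Hab Hb Hx.
  pose proof (D2_gen 0 1 (-1) a b x) as G.
  assert (0 <= 0*2 + 1 * D2 b x + -1 * D2 a x); [|lra].
  apply G. lra. intros t Ht.
  assert (Rpower t (b-2) = Rpower t (a-2) * Rpower t (b-a)).
  { rewrite <- Rpower_plus. f_equal. ring. }
  assert (1 <= Rpower t (b-a)).
  { rewrite <- (Rpower_O t) by lra. apply Rle_Rpower; lra. }
  pose proof (rp_pos t (a-2)).
  assert (a*(a-1) <= b*(b-1)) by nra.
  assert (0 < a*(a-1)) by nra.
  rewrite H. set (Ra := Rpower t (a-2)) in *. set (Q := Rpower t (b-a)) in *.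
  assert (a*(a-1)*Ra <= b*(b-1)*Ra) by (apply Rmult_le_compat_r; lra).
  assert (b*(b-1)*Ra <= b*(b-1)*Ra*Q).
  { rewrite <- (Rmult_1_r (b*(b-1)*Ra)) at 1. apply Rmult_le_compat_l; nra. }
  nra.
Qed.


Lemma SB (a : nat -> R) (B : R) : (forall n, 0 <= a n) ->
  (forall N, sum_f_R0 a N <= B) -> ex_series a /\ Series a <= B.
Proof.
  intros Ha HB.
  assert (Hinc : forall n, sum_n a n <= sum_n a (S n)).
  { intros n. rewrite !sum_n_Reals. simpl. specialize (Ha (S n)). lra. }
  assert (Hb : forall n, sum_n a n <= B). { intros n. rewrite sum_n_Reals. apply HB. }
  destruct (ex_finite_lim_seq_incr _ B Hinc Hb) as [l Hl].
  split. exists l. exact Hl.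
  unfold Series. rewrite (is_lim_seq_unique _ _ Hl).
  pose proof (is_lim_seq_le (sum_n a) (fun _ => B) l B Hb Hl (is_lim_seq_const B)).
  simpl in *. exact H.
Qed.

Lemma SL (a : nat -> R) : (forall n, 0 <= a n) -> ex_series a ->
  forall N, sum_f_R0 a N <= Series a.
Proof.
  intros Ha [l Hl] N.
  rewrite (is_series_unique _ _ Hl). rewrite <- sum_n_Reals.
  apply (is_lim_seq_incr_compare (sum_n a) l Hl).
  intros n. rewrite !sum_n_Reals. simpl. specialize (Ha (S n)). lra.
Qed.

Lemma Slt (a b : nat -> R) : (forall n, 0 <= a n <= b n) -> a 0%nat < b 0%nat ->
  ex_series a -> ex_series b -> Series a < Series b.
Proof.
  intros H H0 Ea Eb.
  rewrite (Series_incr_1 a Ea), (Series_incr_1 b Eb).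
  assert (Series (fun k => a (S k)) <= Series (fun k => b (S k))).
  { apply Series_le. intros n; apply H. apply (proj1 (ex_series_incr_1 b)). exact Eb. }
  lra.
Qed.


Lemma Rpower_base1 (y : R) : Rpower 1 y = 1.
Proof. unfold Rpower. rewrite ln_1, Rmult_0_r. apply exp_0. Qed.

Lemma tele (p x : R) : 1 < p -> 1 <= x ->
  Rpower (x+1) (-p) <= (Rpower x (1-p) - Rpower (x+1) (1-p)) / (p-1).
Proof.
  intros Hp Hx.
  destruct (MVT_cor2 (fun s => Rpower s (1-p)) (fun s => (1-p) * Rpower s (-p)) x (x+1))
    as [c [E Hc]]. lra.
  { intros c Hc. apply dpow. lra. ring. }
  assert (Rpower (x+1) (-p) <= Rpower c (-p)) by (apply rp_anti; lra).
  apply (Rmult_le_reg_r (p-1)). lra.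
  unfold Rdiv. rewrite Rmult_assoc, Rinv_l by lra.
  replace (Rpower x (1 - p) - Rpower (x + 1) (1 - p)) with
    (- (Rpower (x+1) (1-p) - Rpower x (1-p))) by ring.
  rewrite E. nra.
Qed.

Definition zp (p : R) (n : nat) := Rpower (INR n + 1) (-p).

Lemma zp_sum (p : R) : 1 < p -> forall N,
  sum_f_R0 (zp p) N <= 1 + (1 - Rpower (INR N + 1) (1-p)) / (p-1).
Proof.
  intros Hp N. induction N as [|N IH].
  - simpl. unfold zp. simpl. replace (0+1) with 1 by ring.
    rewrite !Rpower_base1. unfold Rdiv. rewrite Rminus_diag, Rmult_0_l. lra.
  - simpl sum_f_R0. unfold zp at 2. rewrite S_INR.
    pose proof (tele p (INR N + 1) Hp). pose proof (pos_INR N).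
    assert (Rpower (INR N + 1 + 1) (- p) <=
      (Rpower (INR N + 1) (1 - p) - Rpower (INR N + 1 + 1) (1 - p)) / (p - 1)) by (apply H; lra).
    unfold Rdiv in *. lra.
Qed.

Lemma zp_bound (p : R) : 1 < p -> forall N, sum_f_R0 (zp p) N <= 1 + 1/(p-1).
Proof.
  intros Hp N. pose proof (zp_sum p Hp N). pose proof (rp_pos (INR N + 1) (1-p)).
  assert (0 < /(p-1)) by (apply Rinv_0_lt_compat; lra).
  unfold Rdiv in *. nra.
Qed.

Lemma zp_pos (p : R) n : 0 <= zp p n.
Proof. unfold zp. apply Rlt_le, rp_pos. Qed.


Lemma rpow_pos (x a : R) : 0 < x -> rpow x a = Rpower x a.
Proof. intros H. unfold rpow. destruct (Rle_dec x 0); [lra|auto]. Qed.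

Lemma rho1 (h : R) : rho h 1 = /2 * (Rpower 2 (2*h) - 2).
Proof.
  unfold rho. simpl INR. rewrite (rpow_pos (1+1)) by lra. rewrite (rpow_pos 1) by lra.
  unfold rpow at 1. destruct (Rle_dec (1-1) 0); [|lra].
  replace (1+1) with 2 by ring. rewrite Rpower_base1. ring.
Qed.

Lemma rhoS (h : R) (m : nat) : rho h (S (S m)) = /2 * D2 (2*h) (INR m + 2).
Proof.
  unfold rho, D2. pose proof (pos_INR m).
  replace (INR (S (S m))) with (INR m + 2) by (rewrite !S_INR; ring).
  rewrite !rpow_pos by lra. ring.
Qed.

Definition tt (h : R) (n : nat) := (rho h (S n))^2.

Lemma rpow_sq (x e : R) : (Rpower x e)^2 = Rpower x (2*e).
Proof. simpl. rewrite Rmult_1_r, <- Rpower_plus. f_equal; ring. Qed.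

Definition cc (h : R) := 2*h*(2*h-1)/2.

Lemma rhoS_bounds (h : R) (Hh : 1/2 < h < 3/4) (m : nat) :
  cc h * Rpower (INR m + 3) (2*h-2) <= rho h (S (S m)) <= cc h * Rpower (INR m + 1) (2*h-2).
Proof.
  rewrite rhoS. pose proof (pos_INR m).
  pose proof (D2_upper (2*h) (INR m + 2)). pose proof (D2_lower (2*h) (INR m + 2)).
  unfold cc. replace (INR m + 2 + 1) with (INR m + 3) in * by ring.
  replace (INR m + 2 - 1) with (INR m + 1) in * by ring.
  split.
  - assert (HH := H1 ltac:(lra) ltac:(lra)). lra.
  - assert (HH := H0 ltac:(lra) ltac:(lra)). lra.
Qed.

Lemma c_pos (h : R) (Hh : 1/2 < h < 3/4) : 0 < cc h.
Proof. unfold cc. nra. Qed.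

Lemma tt_up (h : R) (Hh : 1/2 < h < 3/4) (m : nat) : tt h (S m) <= cc h^2 * zp (4 - 2*(2*h)) m.
Proof.
  unfold tt. destruct (rhoS_bounds h Hh m) as [L U].
  pose proof (rp_pos (INR m + 3) (2*h-2)). pose proof (c_pos h Hh).
  assert (0 <= cc h * Rpower (INR m + 3) (2*h - 2)) by nra.
  unfold zp. replace (- (4 - 2*(2*h))) with (2*(2*h-2)) by ring.
  rewrite <- rpow_sq.
  replace (cc h ^ 2 * Rpower (INR m + 1) (2*h - 2) ^ 2) with ((cc h * Rpower (INR m + 1) (2*h - 2))^2) by ring.
  apply pow_incr. lra.
Qed.

Lemma tt_low (h : R) (Hh : 1/2 < h < 3/4) (m : nat) : cc h^2 * Rpower (INR m + 3) (2*(2*h)-4) <= tt h (S m).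
Proof.
  unfold tt. destruct (rhoS_bounds h Hh m) as [L U].
  pose proof (rp_pos (INR m + 3) (2*h-2)). pose proof (c_pos h Hh).
  assert (0 <= cc h * Rpower (INR m + 3) (2*h - 2)) by nra.
  replace (2*(2*h)-4) with (2*(2*h-2)) by ring.
  rewrite <- rpow_sq.
  replace (cc h ^ 2 * Rpower (INR m + 3) (2*h - 2) ^ 2) with ((cc h * Rpower (INR m + 3) (2*h - 2))^2) by ring.
  apply pow_incr. lra.
Qed.

Lemma tt_nonneg (h : R) (n : nat) : 0 <= tt h n.
Proof. unfold tt. apply pow2_ge_0. Qed.

Lemma tt_sum (h : R) (Hh : 1/2 < h < 3/4) (N : nat) :
  sum_f_R0 (tt h) N <= tt h 0 + cc h^2 * (1 + 1/(4 - 2*(2*h) - 1)).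
Proof.
  assert (Hp : 1 < 4 - 2*(2*h)) by lra.
  pose proof (c_pos h Hh).
  destruct N as [|N]. { simpl. assert (0 < 1/(4-2*(2*h)-1)) by (apply Rdiv_lt_0_compat; lra). nra. }
  rewrite decomp_sum by lia. simpl Init.Nat.pred.
  assert (sum_f_R0 (fun i => tt h (S i)) N <= sum_f_R0 (fun i => cc h^2 * zp (4-2*(2*h)) i) N).
  { apply sum_growing. intros; apply tt_up; auto. }
  replace (sum_f_R0 (fun i => cc h^2 * zp (4-2*(2*h)) i) N) with (sum_f_R0 (zp (4-2*(2*h))) N * cc h^2) in H0
    by (rewrite Rmult_comm, scal_sum; apply sum_eq; intros; ring).
  pose proof (zp_bound _ Hp N).
  assert (sum_f_R0 (zp (4 - 2 * (2*h))) N * cc h^2 <= (1 + 1 / (4 - 2 * (2*h) - 1)) * cc h^2).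
  { apply Rmult_le_compat_r. nra. exact H1. }
  lra.
Qed.

Lemma tt_ex (h : R) (Hh : 1/2 < h < 3/4) :
  ex_series (tt h) /\ Series (tt h) <= tt h 0 + cc h^2 * (1 + 1/(4 - 2*(2*h) - 1)).
Proof. apply SB. apply tt_nonneg. apply tt_sum; auto. Qed.


Lemma ln2_lt1 : ln 2 < 1.
Proof.
  rewrite <- ln_exp with 1. apply ln_increasing. lra.
  pose proof (exp_ineq1 1). lra.
Qed.

Lemma ln2_gt : /2 < ln 2.
Proof. exact ln_lt_2. Qed.

Lemma tt0 (h : R) : tt h 0 = (/2 * (Rpower 2 (2*h) - 2))^2.
Proof. unfold tt. rewrite rho1. reflexivity. Qed.

Lemma rho1_pos (h : R) : 1/2 < h -> 0 < /2 * (Rpower 2 (2*h) - 2).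
Proof.
  intros H. assert (Rpower 2 1 < Rpower 2 (2*h)) by (apply Rpower_lt; lra).
  rewrite Rpower_1 in H0 by lra. lra.
Qed.

Lemma tt_mono (h h' : R) : 1/2 < h -> h < h' -> h' < 3/4 ->
  (forall n, 0 <= tt h n <= tt h' n) /\ tt h 0 < tt h' 0.
Proof.
  intros H1 H2 H3. split.
  - intros [|m]; split; try apply tt_nonneg.
    + rewrite !tt0. pose proof (rho1_pos h H1).
      assert (Rpower 2 (2*h) < Rpower 2 (2*h')) by (apply Rpower_lt; lra).
      apply pow_incr. lra.
    + unfold tt. rewrite !rhoS. pose proof (pos_INR m).
      pose proof (D2_lower (2*h) (INR m + 2)).
      pose proof (rp_pos (INR m + 2 + 1) (2*h-2)).
      assert (0 <= D2 (2*h) (INR m + 2)).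
      { assert (HH := H0 ltac:(lra) ltac:(lra)). assert (0 < 2*h*(2*h-1)) by nra. nra. }
      pose proof (D2_mono (2*h) (2*h') (INR m + 2)) as HM.
      apply pow_incr. split. lra. apply Rmult_le_compat_l. lra. apply HM; lra.
  - rewrite !tt0. pose proof (rho1_pos h H1).
    assert (Rpower 2 (2*h) < Rpower 2 (2*h')) by (apply Rpower_lt; lra).
    simpl. nra.
Qed.

Lemma S_strict (h h' : R) : 1/2 < h -> h < h' -> h' < 3/4 ->
  Series (tt h) < Series (tt h').
Proof.
  intros H1 H2 H3. destruct (tt_mono h h' H1 H2 H3) as [A B].
  apply Slt; auto. apply tt_ex; lra. apply tt_ex; lra.
Qed.

Lemma exp_up (y : R) : y < 1 -> exp y * (1 - y) <= 1.
Proof.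
  intros Hy. pose proof (exp_ineq1_le (-y)). pose proof (exp_pos y).
  assert (exp y * exp (-y) = 1) by (rewrite <- exp_plus; replace (y + -y) with 0 by ring; apply exp_0).
  nra.
Qed.

Lemma h0_ok : Series (tt (11/20)) < 1/4.
Proof.
  destruct (tt_ex (11/20) ltac:(lra)) as [_ B]. unfold cc in B.
  rewrite tt0 in B.
  assert (E : Rpower 2 (2*(11/20)) = 2 * exp (1/10 * ln 2)).
  { replace (2*(11/20)) with (1 + 1/10) by field. rewrite Rpower_plus, Rpower_1 by lra. reflexivity. }
  rewrite E in B.
  pose proof ln2_lt1. pose proof ln2_gt.
  pose proof (exp_up (1/10 * ln 2) ltac:(lra)).
  pose proof (exp_ineq1_le (1/10 * ln 2)).
  set (u := exp (1 / 10 * ln 2)) in *.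
  assert (u <= 10/9) by nra.
  assert (0 <= /2*(2*u - 2) <= 1/9) by lra.
  assert ((/ 2 * (2 * u - 2)) ^ 2 <= 1/81) by nra.
  replace (4 - 2 * (2 * (11 / 20)) - 1) with (4/5) in B by field.
  lra.
Qed.


Lemma ln1p_le (y : R) : 0 <= y -> ln (1 + y) <= y.
Proof.
  intros Hy. rewrite <- (ln_exp y) at 2. apply ln_le. lra. apply exp_ineq1_le.
Qed.

Lemma low_term (x e L : R) : 1 <= x -> 0 <= e -> ln x <= L -> 0 <= 1 - e*L ->
  (1 - e*L) * (ln (x+1) - ln x) <= Rpower x (-(1+e)).
Proof.
  intros Hx He HL HK.
  assert (R : Rpower x (-(1+e)) = / x * exp (- e * ln x)).
  { unfold Rpower. replace (-(1+e) * ln x) with (- ln x + - e * ln x) by ring.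
    rewrite exp_plus, exp_Ropp, exp_ln by lra. reflexivity. }
  rewrite R.
  assert (D : ln (x+1) - ln x <= / x).
  { rewrite <- ln_div by lra. replace ((x+1)/x) with (1 + /x) by (field; lra).
    apply ln1p_le. apply Rlt_le, Rinv_0_lt_compat; lra. }
  assert (D0 : 0 <= ln (x+1) - ln x).
  { pose proof (ln_increasing x (x+1) ltac:(lra) ltac:(lra)). lra. }
  assert (E : 1 - e*L <= exp (- e * ln x)).
  { pose proof (exp_ineq1_le (- e * ln x)). assert (e * ln x <= e * L) by (apply Rmult_le_compat_l; lra). lra. }
  assert (0 < / x) by (apply Rinv_0_lt_compat; lra).
  rewrite (Rmult_comm (1 - e*L)). apply Rmult_le_compat; lra.
Qed.

Lemma tele_ln (K : R) (N : nat) :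
  sum_f_R0 (fun m => K * (ln (INR m + 4) - ln (INR m + 3))) N = K * (ln (INR N + 4) - ln 3).
Proof.
  induction N as [|N IH].
  - simpl. replace (0+4) with 4 by ring. replace (0+3) with 3 by ring. reflexivity.
  - rewrite tech5, IH, S_INR.
    replace (INR N + 1 + 3) with (INR N + 4) by ring.
    replace (INR N + 1 + 4) with (INR N + 5) by ring. ring.
Qed.

Lemma low_sum (e L : R) (N : nat) : 0 <= e -> ln (INR N + 3) <= L -> 0 <= 1 - e*L ->
  (1 - e*L) * (ln (INR N + 4) - ln 3) <=
  sum_f_R0 (fun m => Rpower (INR m + 3) (-(1+e))) N.
Proof.
  intros He HL HK. rewrite <- tele_ln. apply sum_Rle. intros m Hm.
  replace (INR m + 4) with (INR m + 3 + 1) by ring.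
  apply low_term; auto. pose proof (pos_INR m); lra.
  apply Rle_trans with (ln (INR N + 3)); auto. apply ln_le.
  pose proof (pos_INR m); lra. apply le_INR in Hm. lra.
Qed.

Lemma h1_ok : 1/4 < Series (tt (149/200)).
Proof.
  set (h := 149/200).
  destruct (tt_ex h ltac:(unfold h; lra)) as [Ex _].
  set (N := (2^12 - 4)%nat).
  assert (HN : INR N + 4 = 2^12).
  { unfold N. rewrite minus_INR. rewrite pow_INR. simpl. ring.
    simpl. lia. }
  pose proof (SL (tt h) (tt_nonneg h) Ex (S N)) as S1.
  rewrite decomp_sum in S1 by lia. simpl Init.Nat.pred in S1.
  pose proof (tt_nonneg h 0).
  set (c := 2*h*(2*h-1)/2).
  assert (S2 : sum_f_R0 (fun m => c^2 * Rpower (INR m + 3) (-(1 + 1/50))) N <=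
              sum_f_R0 (fun i => tt h (S i)) N).
  { apply sum_growing. intros m. pose proof (tt_low h ltac:(unfold h; lra) m) as T.
    replace (-(1 + 1/50)) with (2 * (2*h) - 4) by (unfold h; field). exact T. }
  replace (sum_f_R0 (fun m => c^2 * Rpower (INR m + 3) (-(1 + 1/50))) N) with
    (c^2 * sum_f_R0 (fun m => Rpower (INR m + 3) (-(1 + 1/50))) N) in S2
    by (rewrite scal_sum; apply sum_eq; intros; ring).
  set (L := ln (INR N + 4)).
  assert (HL : L = 12 * ln 2).
  { unfold L. rewrite HN, ln_pow by lra. simpl. ring. }
  pose proof ln2_lt1. pose proof ln2_gt.
  assert (L3 : ln 3 < 2).
  { assert (ln 3 <= ln (2^2)) by (apply ln_le; lra). rewrite ln_pow in H2 by lra.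
    simpl in H2. lra. }
  pose proof (low_sum (1/50) L N ltac:(lra)) as LS.
  assert (ln (INR N + 3) <= L) by (unfold L; apply ln_le; pose proof (pos_INR N); lra).
  specialize (LS H2 ltac:(lra)). fold L in LS.
  set (Sg := sum_f_R0 (fun m => Rpower (INR m + 3) (-(1 + 1/50))) N) in *.
  assert (Q : 304/100 <= (1 - 1/50*L) * (L - ln 3)).
  { assert (6 < L < 12) by lra.
    assert (76/100 <= 1 - 1/50*L) by lra. assert (4 <= L - ln 3) by lra. nra. }
  assert (Hc : c = 7301/20000) by (unfold c, h; field).
  rewrite Hc in S2. nra.
Qed.


Theorem corollaryA5 :
  exists hc : R, 1/2 < hc < 3/4 /\
    (forall h : R, 1/2 < h < hc ->
       ex_series (fun n : nat => (rho h (S n))^2) /\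
       Series (fun n : nat => (rho h (S n))^2) < 1/4) /\
    (forall h : R, hc < h < 3/4 ->
       ex_series (fun n : nat => (rho h (S n))^2) /\
       Series (fun n : nat => (rho h (S n))^2) > 1/4).
Proof.
  set (E := fun h => 1/2 < h < 3/4 /\ Series (tt h) <= 1/4).
  assert (Hb : bound E).
  { exists (3/4). intros x [Hx _]. lra. }
  assert (He : exists x, E x).
  { exists (11/20). split. lra. pose proof h0_ok. lra. }
  destruct (completeness E Hb He) as [m [Hub Hlub]].
  assert (Hup : forall x, E x -> x <= 149/200).
  { intros x [Hx Sx]. destruct (Rle_dec x (149/200)) as [|Hn]; auto.
    exfalso. pose proof (S_strict (149/200) x ltac:(lra) ltac:(lra) ltac:(lra)).
    pose proof h1_ok. lra. }
  assert (Hm1 : 11/20 <= m) by (apply Hub; split; [lra| pose proof h0_ok; lra]).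
  assert (Hm2 : m <= 149/200) by (apply Hlub; intros x Ex; apply Hup; auto).
  exists m. split. lra. split.
  - intros h Hh. split. apply (tt_ex h); lra.
    change (Series (tt h) < 1/4).
    destruct (Rlt_dec (Series (tt h)) (1/4)) as [|Hn]; auto. exfalso.
    assert (m <= h); [|lra].
    apply Hlub. intros x [Hx Sx].
    destruct (Rle_dec x h) as [|Hxh]; auto. exfalso.
    pose proof (S_strict h x ltac:(lra) ltac:(lra) ltac:(lra)). lra.
  - intros h Hh. split. apply (tt_ex h); lra.
    change (Series (tt h) > 1/4).
    destruct (Rlt_dec (1/4) (Series (tt h))) as [|Hn]; auto. exfalso.
    assert (h <= m); [|lra].
    apply Hub. split. lra. lra.
Qed.
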